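(* A graph $G$ has exactly one Grundy total dominating set (i.e., is a unique Grundy total domination graph) if and only if $\gamma_{gr}^{t}(G)=n(G)-i(G)$, where $n(G)$ is the number of vertices and $i(G)$ the number of isolated vertices of $G$.
   Context: For a graph $G$, $N(v)$ denotes the open neighborhood of $v$. A sequence $(v_1,\ldots,v_k)$ of distinct vertices is an open neighborhood sequence if $N(v_i)\setminus\bigcup_{j=1}^{i-1}N(v_j)\neq\emptyset$ for each $i\in[k]$. The Grundy total domination number $\gamma_{gr}^{t}(G)$ is the maximum length of an open neighborhood sequence; the vertex set of such a maximum-length sequence is a Grundy total dominating set. *)

(* Defs.v *)
(* A simple graph is a symmetric irreflexive relation e on a finType T. *)
From mathcomp Require Import all_boot.
Set Implicit Arguments. Unset Strict Implicit. Unset Printing Implicit Defensive.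

Section GrundyTotal.
Variables (T : finType) (e : rel T).

Definition N (v : T) : {set T} := [set u | e v u].

Definition is_ONS (s : seq T) : bool :=
  uniq s &&
  [forall i : 'I_(size s),
     N (tnth (in_tuple s) i) :\: \bigcup_(v <- take i s) N v != set0].

(* maximum length of an open neighbourhood sequence
   (every ONS is duplicate-free, hence of length <= #|T|) *)
Definition gamma_gr_t : nat :=
  \max_(k < #|T|.+1 | [exists t : k.-tuple T, is_ONS t]) k.

Definition is_GTDS (S : {set T}) : Prop :=
  exists s : seq T, [/\ is_ONS s, size s = gamma_gr_t & S = [set x in s]].

Definition n_isolated : nat := #|[set v | [forall u, ~~ e v u]]|.

End GrundyTotal.

(* Main.v *)
Require Import Defs.
From mathcomp Require Import all_boot.
From mathcomp Require Import zify.
Set Implicit Arguments. Unset Strict Implicit. Unset Printing Implicit Defensive.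

Section Proofs.
Variables (T : finType) (e : rel T).
Hypothesis e_sym : symmetric e.

Definition FP (x0 : T) (s f : seq T) : Prop :=
  size f = size s /\
  forall i, i < size s -> e (nth x0 s i) (nth x0 f i) /\
    forall j, j < i -> ~~ e (nth x0 s j) (nth x0 f i).

Lemma mem_bigcup_seq (r : seq T) u :
  (u \in \bigcup_(v <- r) N e v) = has (fun v => e v u) r.
Proof.
elim: r => [|v r IH]; first by rewrite big_nil in_set0.
by rewrite big_cons in_setU IH /N inE.
Qed.

Lemma FP_uniq x0 s f : FP x0 s f -> uniq s.
Proof.
case=> _ H; apply/(uniqP x0) => i j; rewrite !inE => hi hj hij.
case: (ltngtP i j) => // lt.
- have [h1 h2] := H j hj; move: (h2 i lt); by rewrite hij h1.
- have [h1 h2] := H i hi; move: (h2 j lt); by rewrite -hij h1.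
Qed.

Lemma ONS_FP x0 s : is_ONS e s <-> exists f, FP x0 s f.
Proof.
split.
- case/andP => _ /forallP H.
  pose g i := odflt x0 [pick u in N e (nth x0 s i) :\: \bigcup_(v <- take i s) N e v].
  exists (map g (iota 0 (size s))); split; first by rewrite size_map size_iota.
  move=> i hi; rewrite (nth_map 0) ?size_iota // nth_iota // add0n.
  have := H (Ordinal hi); rewrite (tnth_nth x0) /= /g.
  case: pickP => [u hu _ | h0]; last first.
    by case/set0Pn => u hu; move: (h0 u) => /=; rewrite hu.
  rewrite in_setD mem_bigcup_seq /N inE in hu; case/andP: hu => hnot hu.
  split => // j hj; apply: contra hnot => hej.
  apply/(has_nthP x0); exists j; first by rewrite size_takel // ltnW.
  by rewrite nth_take.
- move=> [f Hf]; rewrite /is_ONS (FP_uniq Hf) /=; apply/forallP => i.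
  have [_ H] := Hf; have [h1 h2] := H i (ltn_ord i).
  apply/set0Pn; exists (nth x0 f i).
  rewrite in_setD mem_bigcup_seq /N inE (tnth_nth x0) /= h1 andbT.
  apply/(has_nthP x0) => -[j]; rewrite size_takel ?(ltnW (ltn_ord i)) // => hj.
  by rewrite nth_take // (negbTE (h2 j hj)).
Qed.

Lemma FP_rev x0 s f : FP x0 s f -> FP x0 (rev f) (rev s).
Proof.
case=> hsz H; split; first by rewrite !size_rev.
move=> i; rewrite size_rev hsz => hi.
rewrite !nth_rev ?hsz //.
have [h1 h2] := H (size s - i.+1) ltac:(lia).
split; first by rewrite e_sym.
move=> j hj.
rewrite nth_rev; last by rewrite hsz; lia.
rewrite hsz e_sym.
have [_ h3] := H (size s - j.+1) ltac:(lia).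
apply: h3; lia.
Qed.

Lemma FP_set x0 s f m z : FP x0 s f -> m < size s -> e (nth x0 s m) z ->
  (forall j, j < m -> ~~ e (nth x0 s j) z) -> FP x0 s (set_nth x0 f m z).
Proof.
case=> hsz H hm h1 h2; split.
  by rewrite size_set_nth hsz; apply/maxn_idPr.
move=> i hi; rewrite nth_set_nth /=; case: eqP => [->|_]; [by split | exact: H].
Qed.

Lemma FP_rcons x0 s f x z : FP x0 s f -> e x z -> ~~ has (fun v => e v z) s ->
  FP x0 (rcons s x) (rcons f z).
Proof.
case=> hsz H hxz hn; split; first by rewrite !size_rcons hsz.
move=> i; rewrite size_rcons ltnS leq_eqVlt => /orP[/eqP->|hi].
- rewrite !nth_rcons hsz ltnn eqxx; split=> // j hj; rewrite nth_rcons hj.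
  apply: contra hn => h; apply/(has_nthP x0); by exists j.
- rewrite !nth_rcons hsz hi; have [h1 h2] := H i hi; split=> // j hj.
  rewrite nth_rcons (ltn_trans hj hi); exact: h2.
Qed.

Lemma FP_noniso x0 s f v : FP x0 s f -> v \in s -> exists u, e v u.
Proof.
case=> _ H /(nthP x0) [i hi <-]; have [h1 _] := H i hi; by exists (nth x0 f i).
Qed.

Lemma ONS_nil : is_ONS e [::].
Proof. by rewrite /is_ONS /=; apply/forallP => -[]. Qed.

Lemma ONS_le s : is_ONS e s -> size s <= gamma_gr_t e.
Proof.
move=> hs; have hu : uniq s by case/andP: hs.
have hle : size s < #|T|.+1 by rewrite ltnS -(card_uniqP hu) max_card.
rewrite /gamma_gr_t; apply: (@leq_bigmax_cond _ _ _ (Ordinal hle)) => /=.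
by apply/existsP; exists (in_tuple s).
Qed.

Lemma gamma_le : gamma_gr_t e <= #|T|.
Proof. apply/bigmax_leqP => i _; rewrite -ltnS; exact: ltn_ord. Qed.

Lemma gamma_ex : exists s, is_ONS e s /\ size s = gamma_gr_t e.
Proof.
have P0 : (@ord0 #|T|) \in [pred k : 'I_#|T|.+1 | [exists t : k.-tuple T, is_ONS e t]].
  by rewrite inE; apply/existsP; exists [tuple]; exact: ONS_nil.
have Hc : 0 < #|[pred k : 'I_#|T|.+1 | [exists t : k.-tuple T, is_ONS e t]]|.
  by apply/card_gt0P; exists ord0.
have [k0 Hk0 E] := eq_bigmax_cond (fun k : 'I_#|T|.+1 => nat_of_ord k) Hc.
rewrite inE in Hk0; case/existsP: Hk0 => t ht; exists t; split => //.
by rewrite size_tuple /gamma_gr_t E.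
Qed.

End Proofs.

Theorem corollary5p3 (T : finType) (e : rel T)
    (e_sym : symmetric e) (e_irr : irreflexive e) :
  (exists! S : {set T}, is_GTDS e S) <->
  gamma_gr_t e = #|T| - n_isolated e.
Proof.
case: (pickP (@predT T)) => [x0 _|hT]; last first.
  have cT : #|T| = 0 by apply: eq_card0.
  have g0 : gamma_gr_t e = 0 by apply/eqP; rewrite -leqn0 -cT gamma_le.
  rewrite g0 cT sub0n; split => // _.
  exists set0; split.
  - exists [::]; split; [exact: ONS_nil | by rewrite g0 | by apply/setP => x; rewrite !inE].
  - move=> S' _; apply/setP => x; by have := hT x.
set I := [set v | [forall u, ~~ e v u]].
have hI : forall v, (v \in ~: I) = [exists u, e v u].
  move=> v; rewrite in_setC inE negb_forall.
  by apply/existsP/existsP => -[u hu]; exists u; move: hu; rewrite negbK.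
have cI : #|~: I| = #|T| - n_isolated e by rewrite cardsCs setCK.
rewrite -cI; split.
- case=> S0 [[s [hs hsz ->]] huniq].
  have [f hf] := (ONS_FP e x0 s).1 hs.
  have keyB : forall z, has (fun v => e v z) s -> z \in s.
    move=> z hz; set m := find (fun v => e v z) s.
    have hm : m < size s by rewrite -has_find.
    have hf' := FP_set hf hm (nth_find x0 hz) (fun j hj => negbT (before_find x0 hj)).
    have hr := FP_rev e_sym hf'.
    have hs' : is_ONS e (rev (set_nth x0 f m z)) by apply/(ONS_FP e x0); exists (rev s).
    have hsize : size (rev (set_nth x0 f m z)) = gamma_gr_t e.
      by rewrite size_rev; case: hf' => -> _.
    have : [set x in s] = [set x in rev (set_nth x0 f m z)].
      by apply: huniq; exists (rev (set_nth x0 f m z)).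
    move/setP/(_ z); rewrite !inE mem_rev => ->.
    apply/(nthP x0); exists m; last by rewrite nth_set_nth /= eqxx.
    rewrite size_set_nth; lia.
  have keyM : forall x z, e x z -> has (fun v => e v z) s.
    move=> x z hxz; apply/negPn/negP => hn.
    have := ONS_le ((ONS_FP e x0 _).2 (ex_intro _ _ (FP_rcons hf hxz hn))).
    by rewrite size_rcons hsz ltnn.
  suff E : [set x in s] =i ~: I.
    rewrite -hsz -(card_uniqP (FP_uniq hf)); apply: eq_card => x; by rewrite -E inE.
  move=> x; rewrite inE hI; apply/idP/existsP.
  + move=> hx; have [u hu] := FP_noniso hf hx; by exists u.
  + case=> y hxy; have hy := keyB _ (keyM _ _ hxy).
    apply: keyB; apply/hasP; exists y => //; by rewrite e_sym.
- move=> hg; have [s [hs hsz]] := gamma_ex e.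
  have C : forall t, is_ONS e t -> size t = gamma_gr_t e -> [set x in t] = ~: I.
    move=> t ht htsz; have [f hf] := (ONS_FP e x0 t).1 ht.
    apply/eqP; rewrite eqEcard; apply/andP; split.
    + apply/subsetP => x; rewrite inE hI => hx; have [u hu] := FP_noniso hf hx.
      by apply/existsP; exists u.
    + by rewrite -hg -htsz cardsE (card_uniqP (FP_uniq hf)).
  exists [set x in s]; split; first by exists s.
  move=> S' [s' [hs' hsz' ->]].
  by rewrite (C _ hs hsz) (C _ hs' hsz').
Qed.
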